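(* Let $p$ be a prime, $\mathbb{K}$ a finite extension of $\mathbb{Q}_p$ of degree $n$ (with the unique extension of the $p$-adic norm), and $G$ a topological group. Then $EH^2_{cb}(G, \mathbb{K}) \cong EH^2_{cb}(G, \mathbb{Q}_p)^n$ (as $\mathbb{Q}_p$-vector spaces). In particular, $EH^2_{cb}(G, \mathbb{K}) = 0$ if and only if $EH^2_{cb}(G, \mathbb{Q}_p) = 0$.
   Context: For a valued field $\mathbb{L}$, a quasimorphism $G\to\mathbb{L}$ is a continuous map $f$ with $\sup_{g,h}|f(gh)-f(g)-f(h)|<\infty$. The exact second continuous bounded cohomology is $EH^2_{cb}(G,\mathbb{L})=Q(G,\mathbb{L})/(\mathrm{Hom}_c(G,\mathbb{L})+C_b(G,\mathbb{L}))$, where $Q$ is the space of quasimorphisms, $\mathrm{Hom}_c$ continuous homomorphisms and $C_b$ continuous bounded functions; equivalently, the kernel of the comparison map $H^2_{cb}(G,\mathbb{L})\to H^2_c(G,\mathbb{L})$ with trivial coefficients. *)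

(* Defs.v *)
From HB Require Import structures.
From mathcomp Require Import all_boot all_order all_algebra all_field.
From mathcomp Require Import all_classical all_reals all_analysis.
Set Implicit Arguments. Unset Strict Implicit. Unset Printing Implicit Defensive.
Import Order.TTheory GRing.Theory Num.Theory.
Local Open Scope ring_scope.

Definition is_absval (R : realType) (L : nzRingType) (a : L -> R) : Prop :=
  [/\ forall x, 0 <= a x,
      forall x, a x = 0 <-> x = 0,
      forall x y, a (x * y) = a x * a y &
      forall x y, a (x + y) <= a x + a y].

Definition padic_abs (R : realType) (p : nat) (q : rat) : R :=
  if q == 0 then 0
  else ((p%:R : R) ^+ (logn p (absz (denq q)))) / ((p%:R : R) ^+ (logn p (absz (numq q)))).

(* This characterizes Q_p up to
   isometric isomorphism. *)
Definition cauchy_seq (R : realType) (L : zmodType) (a : L -> R) (u : nat -> L) :=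
  forall eps : R, 0 < eps ->
    exists N, forall m k, (N <= m)%N -> (N <= k)%N -> a (u m - u k) < eps.

Definition converges_to (R : realType) (L : zmodType) (a : L -> R) (u : nat -> L) (l : L) :=
  forall eps : R, 0 < eps -> exists N, forall m, (N <= m)%N -> a (u m - l) < eps.

Definition is_Qp (R : realType) (p : nat) (F : fieldType) (absF : F -> R) : Prop :=
  [/\ is_absval absF,
      [pchar F] =i pred0,
      forall q : rat, absF (ratr q) = padic_abs R p q,
      (forall x : F, forall eps : R, 0 < eps -> exists q : rat, absF (x - ratr q) < eps) &
      (forall u : nat -> F, cauchy_seq absF u -> exists l, converges_to absF u l)].

Record topGroup := TopGroup {
  tg_car : topologicalType;
  tg_mul : tg_car -> tg_car -> tg_car;
  tg_inv : tg_car -> tg_car;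
  tg_one : tg_car;
  tg_mulA : associative tg_mul;
  tg_mul1 : left_id tg_one tg_mul;
  tg_mulV : left_inverse tg_one tg_inv tg_mul;
  tg_mul_cont : continuous (fun xy : tg_car * tg_car => tg_mul xy.1 xy.2);
  tg_inv_cont : continuous tg_inv }.

Section QM.
Variables (R : realType) (L : nzRingType) (a : L -> R) (G : topGroup).
Local Notation gmul := (@tg_mul G).

Definition cont_into (f : tg_car G -> L) : Prop :=
  forall x (eps : R), 0 < eps -> \forall y \near x, a (f y - f x) < eps.

Definition quasimorphism (f : tg_car G -> L) : Prop :=
  cont_into f /\
  exists C : R, forall g h, a (f (gmul g h) - f g - f h) <= C.

Definition cont_hom (f : tg_car G -> L) : Prop :=
  cont_into f /\ forall g h, f (gmul g h) = f g + f h.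

Definition cont_bounded (f : tg_car G -> L) : Prop :=
  cont_into f /\ exists C : R, forall g, a (f g) <= C.

(* f lies in Hom_c(G,L) + C_b(G,L), i.e. its class in EH^2_cb(G,L) is zero *)
Definition trivial_class (f : tg_car G -> L) : Prop :=
  exists phi psi, cont_hom phi /\ cont_bounded psi /\ forall g, f g = phi g + psi g.

Definition EH2cb_zero : Prop :=
  forall f, quasimorphism f -> trivial_class f.
End QM.

(* EH^2_cb(G,K) ~= EH^2_cb(G,Q_p)^n as Q_p-vector spaces, where
   EH^2_cb(G,L) = Q(G,L) / (Hom_c(G,L) + C_b(G,L)).  A map between the
   quotients is given on representatives (quasimorphisms); we require it to
   be well defined, Q_p-linear, injective and surjective on the quotients. *)
Definition EH2cb_iso_pow (R : realType) (F : fieldType) (absF : F -> R)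
    (K : fieldExtType F) (absK : K -> R) (G : topGroup) (n : nat) : Prop :=
  exists Phi : (tg_car G -> K) -> 'I_n -> tg_car G -> F,
  [/\
      forall f, quasimorphism absK f -> forall i, quasimorphism absF (Phi f i),
      forall f g, quasimorphism absK f -> quasimorphism absK g ->
        trivial_class absK (fun x => f x - g x) ->
        forall i, trivial_class absF (fun x => Phi f i x - Phi g i x),
      forall (c : F) f g, quasimorphism absK f -> quasimorphism absK g ->
        forall i, trivial_class absF
          (fun x => Phi (fun y => c *: f y + g y) i x - (c * Phi f i x + Phi g i x)),
      forall f, quasimorphism absK f ->
        (forall i, trivial_class absF (Phi f i)) -> trivial_class absK f &
      forall u : 'I_n -> tg_car G -> F, (forall i, quasimorphism absF (u i)) ->
        exists2 f, quasimorphism absK f &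
          forall i, trivial_class absF (fun x => Phi f i x - u i x)].

(* Main.v *)
Require Import Defs.
From HB Require Import structures.
From mathcomp Require Import all_boot all_order all_algebra all_field.
From mathcomp Require Import all_classical all_reals all_analysis.
Import Order.TTheory GRing.Theory Num.Theory.
Local Open Scope ring_scope.

Section AbsL.
Variables (R : realType) (L : nzRingType) (a : L -> R) (ha : is_absval a).

Lemma av_ge0 x : 0 <= a x. Proof. by case: ha. Qed.
Lemma av0 : a 0 = 0. Proof. by case: ha => _ h _ _; apply h. Qed.
Lemma av_eq0 x : a x = 0 -> x = 0. Proof. by case: ha => _ h _ _; apply h. Qed.
Lemma avM x y : a (x * y) = a x * a y. Proof. by case: ha. Qed.
Lemma avD x y : a (x + y) <= a x + a y. Proof. by case: ha. Qed.
Lemma av1 : a 1 = 1.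
Proof.
have h := avM 1 1; rewrite mulr1 in h.
have nz : a 1 != 0 by apply/eqP => /av_eq0/eqP; rewrite oner_eq0.
by apply: (mulfI nz); rewrite -h mulr1.
Qed.
Lemma avN x : a (- x) = a x.
Proof.
have h : a (-1) = 1.
  have e := avM (-1) (-1); rewrite mulrNN mulr1 av1 in e.
  have g := av_ge0 (-1).
  have : (a (-1) - 1) * (a (-1) + 1) = 0 by rewrite -subr_sqr expr1n expr2 -e subrr.
  move/eqP; rewrite mulf_eq0 => /orP [/eqP|/eqP] h1; first by apply/eqP; rewrite -subr_eq0 h1.
  exfalso; have : 0 < a (-1) + 1 by rewrite ltr_wpDl.
  by rewrite h1 ltxx.
by rewrite -mulN1r avM h mul1r.
Qed.
Lemma avB x y : a (x - y) <= a x + a y.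
Proof. by rewrite -(avN y) avD. Qed.
Lemma avBC x y : a (x - y) = a (y - x).
Proof. by rewrite -avN opprB. Qed.

Lemma av_sum (I : Type) (r : seq I) (P : pred I) (F : I -> L) :
  a (\sum_(i <- r | P i) F i) <= \sum_(i <- r | P i) a (F i).
Proof.
elim/big_rec2: _ => [|i y1 y2 _ h]; first by rewrite av0.
by apply: le_trans (avD _ _) _; rewrite lerD2l.
Qed.
End AbsL.

Lemma small_inv (R : realType) (e : R) : 0 < e ->
  exists M : nat, forall m, (M <= m)%N -> (m.+1%:R)^-1 < e.
Proof.
move=> e0; exists (Num.truncn (e^-1)) => m hm.
rewrite -(invrK e) ltf_pV2 ?posrE ?invr_gt0 //.
apply: lt_le_trans (truncnS_gt _) _.
by rewrite ler_nat.
Qed.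

Section Equiv.
Variables (R : realType) (F : fieldType) (aF : F -> R) (haF : is_absval aF).
Hypothesis hcomp : forall u, cauchy_seq aF u -> exists l, converges_to aF u l.
Variables (V : lmodType F) (N : V -> R).
Hypothesis N_ge0 : forall v, 0 <= N v.
Hypothesis N_eq0 : forall v, N v = 0 -> v = 0.
Hypothesis NZ : forall c v, N (c *: v) = aF c * N v.
Hypothesis ND : forall u v, N (u + v) <= N u + N v.

Lemma N0 : N 0 = 0. Proof. by rewrite -(scale0r 0) NZ av0 ?mul0r. Qed.
Lemma NN v : N (- v) = N v. Proof. by rewrite -scaleN1r NZ avN // av1 // mul1r. Qed.

Lemma N_sum_le {d} (c : 'I_d -> F) (w : 'I_d -> V) :
  N (\sum_j c j *: w j) <= \sum_j aF (c j) * N (w j).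
Proof.
elim/big_rec2: _ => [|i y1 y2 _ h]; first by rewrite N0.
by apply: le_trans (ND _ _) _; rewrite NZ lerD2l.
Qed.

Lemma N_small {d} (w : 'I_d -> V) eps : 0 < eps ->
  exists2 eta, 0 < eta & forall c : 'I_d -> F,
    (forall j, aF (c j) < eta) -> N (\sum_j c j *: w j) < eps.
Proof.
move=> e0; set S := \sum_j N (w j).
have S0 : 0 <= S by apply: sumr_ge0.
exists (eps / (1 + S)); first by rewrite divr_gt0 // ltr_wpDr.
move=> c hc; apply: (le_lt_trans (N_sum_le (d:=d) c w)).
apply: (@le_lt_trans _ _ (eps / (1 + S) * S)).
  rewrite mulr_sumr; apply: ler_sum => j _.
  by rewrite ler_wpM2r // ltW.
have h1 : eps / (1 + S) * S < eps / (1 + S) * (1 + S).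
  have p : 0 < 1 + S by rewrite ltr_wpDr.
  by rewrite ltr_pM2l ?divr_gt0 // -subr_gt0 addrK ltr01.
by rewrite divfK ?gt_eqF ?ltr_wpDr // in h1.
Qed.

Lemma norm_bound d (w : 'I_d -> V) :
  (forall c : 'I_d -> F, \sum_j c j *: w j = 0 -> forall j, c j = 0) ->
  exists2 C, 0 < C & forall (c : 'I_d -> F) i, aF (c i) <= C * N (\sum_j c j *: w j).
Proof.
elim: d w => [|d IH] w hw; first by exists 1 => // c [].
have key : forall i : 'I_d.+1, exists C, 0 < C /\
    forall c : 'I_d.+1 -> F, aF (c i) <= C * N (\sum_j c j *: w j).
  move=> i.
  pose w' := fun j : 'I_d => w (lift i j).
  pose ext (c' : 'I_d -> F) (x : F) :=
    fun k : 'I_d.+1 => if unlift i k is Some j then c' j else x.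
  have sum_ext : forall c' x,
      \sum_k ext c' x k *: w k = x *: w i + \sum_j c' j *: w' j.
    move=> c' x; rewrite (bigD1_ord i) //= /ext unlift_none; congr (_ + _).
    by apply: eq_bigr => j _; rewrite liftK.
  have hw' : forall c' : 'I_d -> F, \sum_j c' j *: w' j = 0 -> forall j, c' j = 0.
    move=> c' h j; have := hw (ext c' 0); rewrite sum_ext scale0r add0r.
    by move=> /(_ h (lift i j)); rewrite /ext liftK.
  have [C' C'0 hC'] := IH w' hw'.
  have [delta d0 hd] : exists2 delta, 0 < delta &
      forall c' : 'I_d -> F, delta <= N (w i + \sum_j c' j *: w' j).
    apply: contrapT => nex.
    have hk : forall k : nat, exists c' : 'I_d -> F,
        N (w i + \sum_j c' j *: w' j) < (k.+1%:R)^-1.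
      move=> k; apply: contrapT => hk; apply: nex; exists (k.+1%:R)^-1.
        by rewrite invr_gt0 ltr0n.
      move=> c'; rewrite leNgt; apply/negP => hlt; apply: hk; by exists c'.
    have [cs hcs] := choice hk.
    pose s k := \sum_j cs k j *: w' j.
    have hcauchy : forall j, cauchy_seq aF (fun k => cs k j).
      move=> j eps e0.
      have e1 : 0 < eps / C' / 2 by rewrite !divr_gt0.
      have [M hM] := @small_inv _ _ e1.
      exists M => m k hm hkM.
      have := hC' (fun j => cs m j - cs k j) j => /= h.
      apply: (le_lt_trans h).
      have -> : \sum_j (cs m j - cs k j) *: w' j = (w i + s m) - (w i + s k).
        rewrite opprD addrACA subrr add0r /s -sumrB.
        by apply: eq_bigr => j' _; rewrite scalerBl.
      have h2 : N ((w i + s m) - (w i + s k)) < eps / C'.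
        apply: le_lt_trans (ND _ _) _; rewrite NN.
        rewrite [X in _ < X](splitr (eps / C')).
        apply: ltrD; apply: lt_trans (hM _ _); [exact: hcs|exact: hm|exact: hcs|exact: hkM].
      by rewrite mulrC -ltr_pdivlMr.
    have [l hl] := fin_all_exists (fun j => hcomp _ (hcauchy j)).
    pose v := w i + \sum_j l j *: w' j.
    have Nv : N v = 0.
      apply/eqP; rewrite eq_le N_ge0 andbT leNgt; apply/negP => pos.
      have e2 : 0 < N v / 2 by rewrite divr_gt0.
      have [eta eta0 heta] := N_small (d:=d) w' _ e2.
      have [Ns hNs] := fin_all_exists (fun j => hl j eta eta0).
      have [M hM] := @small_inv _ _ e2.
      pose k := maxn M (\max_j Ns j).
      have ev : v = (w i + s k) + (\sum_j (l j - cs k j) *: w' j).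
        have -> : \sum_j (l j - cs k j) *: w' j = \sum_j l j *: w' j - s k.
          by rewrite /s -sumrB; apply: eq_bigr => j' _; rewrite scalerBl.
        by rewrite addrACA subrr addr0.
      have : N v < N v.
        rewrite [in X in X < _]ev [X in _ < X](splitr (N v)).
        apply: le_lt_trans (ND _ _) _; apply: ltrD.
          by apply: lt_trans (hcs k) (hM _ _); rewrite leq_maxl.
        apply: heta => j; rewrite avBC //; apply: hNs.
        by rewrite (leq_trans _ (leq_maxr _ _)) // (leq_bigmax j).
      by rewrite ltxx.
    have := hw (ext l 1); rewrite sum_ext scale1r -/v (N_eq0 _ Nv) => /(_ erefl i).
    by rewrite /ext unlift_none => /eqP; rewrite oner_eq0.
  exists delta^-1; split; first by rewrite invr_gt0.
  move=> c; have [ci0|ci0] := eqVneq (c i) 0.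
    by rewrite ci0 av0 // mulr_ge0 // invr_ge0 ltW.
  have -> : \sum_j c j *: w j
      = c i *: (w i + \sum_j (c (lift i j) / c i) *: w' j).
    rewrite (bigD1_ord i) //= scalerDr scaler_sumr; congr (_ + _).
    by apply: eq_bigr => j _; rewrite scalerA mulrC divfK.
  rewrite NZ -[X in X <= _](mulKf (lt0r_neq0 d0)).
  apply: ler_wpM2l; first by rewrite invr_ge0 ltW.
  by rewrite mulrC; apply: ler_wpM2l; [exact: av_ge0|exact: hd].
have [Cs hCs] := fin_all_exists key.
exists (1 + \sum_i Cs i).
  by rewrite ltr_wpDr // sumr_ge0 // => j _; apply: ltW (hCs j).1.
move=> c i; apply: le_trans ((hCs i).2 c) _; apply: ler_wpM2r; first exact: N_ge0.
apply: (@le_trans _ _ (\sum_i Cs i)).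
  by rewrite (bigD1 i) //= lerDl sumr_ge0 // => j _; apply: ltW (hCs j).1.
by rewrite lerDr.
Qed.
End Equiv.
Arguments av_ge0 {R L a} ha x.
Arguments av0 {R L a} ha.
Arguments av_eq0 {R L a} ha x.
Arguments avM {R L a} ha x y.
Arguments avD {R L a} ha x y.
Arguments av1 {R L a} ha.
Arguments avN {R L a} ha x.
Arguments avB {R L a} ha x y.
Arguments avBC {R L a} ha x y.
Arguments av_sum {R L a} ha {I} r P F.
Arguments norm_bound {R F aF} haF hcomp {V N} N_ge0 N_eq0 NZ ND {d} w _.
Arguments N_small {R F aF} haF {V N} N_ge0 NZ ND {d} w {eps} _.
Arguments N_sum_le {R F aF} haF {V N} NZ ND {d} c w.

Lemma trivial_zero (R : realType) (L : nzRingType) (a : L -> R) (ha : is_absval a)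
  (G : topGroup) (f : tg_car G -> L) : (forall x, f x = 0) -> trivial_class a f.
Proof.
move=> h; exists (fun _ => 0), (fun _ => 0); split; last split.
- split; last by move=> *; rewrite addr0.
  by move=> x e e0; apply: nearW => y; rewrite subrr av0.
- split; first by move=> x e e0; apply: nearW => y; rewrite subrr av0.
  by exists 0 => g; rewrite av0.
- by move=> g; rewrite h addr0.
Qed.

Lemma mul_lt_div (R : realType) (C e x : R) : 0 < C -> x < e / C -> C * x < e.
Proof. by move=> C0 h; rewrite mulrC -ltr_pdivlMr. Qed.

Section Main.
Variables (R : realType) (F : fieldType) (aF : F -> R) (haF : is_absval aF).
Hypothesis hcomp : forall u, cauchy_seq aF u -> exists l, converges_to aF u l.
Variables (K : fieldExtType F) (aK : K -> R) (haK : is_absval aK).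
Hypothesis hext : forall c : F, aK (c%:A) = aF c.
Variable G : topGroup.

Local Notation nK := (\dim (fullv : {vspace K})).
Local Notation b := (vbasis (fullv : {vspace K})).

Lemma NZK c v : aK (c *: v) = aF c * aK v.
Proof. by rewrite -mulr_algl avM // hext. Qed.

Lemma bfree : free b.
Proof. exact: basis_free (vbasisP _). Qed.

Lemma comb_coord x : \sum_i coord b i x *: b`_i = x.
Proof. by rewrite -coord_vbasis // memvf. Qed.

Lemma coord_bound : exists2 C, 0 < C & forall i x, aF (coord b i x) <= C * aK x.
Proof.
have hw : forall c : 'I_nK -> F, \sum_j c j *: b`_j = 0 -> forall j, c j = 0.
  exact/freeP/bfree.
have [C C0 hC] := norm_bound haF hcomp (av_ge0 haK) (av_eq0 haK) NZK (avD haK) (fun j => b`_j) hw.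
by exists C => // i x; have := hC (fun j => coord b j x) i; rewrite comb_coord.
Qed.

Definition comb (u : 'I_nK -> tg_car G -> F) x := \sum_i u i x *: b`_i.

Lemma coord_comb u i x : coord b i (comb u x) = u i x.
Proof. by rewrite /comb coord_sum_free // bfree. Qed.

Lemma cont_coord (f : tg_car G -> K) i : cont_into aK f -> cont_into aF (fun x => coord b i (f x)).
Proof.
have [C C0 hC] := coord_bound.
move=> hf x e e0; have := hf x (e / C) (divr_gt0 e0 C0).
apply: filterS => y hy; rewrite -raddfB.
by apply: le_lt_trans (hC _ _) _; apply: mul_lt_div.
Qed.

Lemma qm_coord (f : tg_car G -> K) i : quasimorphism aK f -> quasimorphism aF (fun x => coord b i (f x)).
Proof.
have [C C0 hC] := coord_bound.
case=> hc [Cf hCf]; split; first exact: cont_coord.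
exists (C * Cf) => g h; rewrite -!raddfB.
by apply: le_trans (hC _ _) _; rewrite ler_wpM2l // ltW.
Qed.

Lemma trivial_coord (f : tg_car G -> K) i : trivial_class aK f -> trivial_class aF (fun x => coord b i (f x)).
Proof.
have [C C0 hC] := coord_bound.
case=> phi [psi [[hc hh] [[hc' [Cp hCp]] he]]].
exists (fun x => coord b i (phi x)), (fun x => coord b i (psi x)); split; last split.
- split; first exact: cont_coord.
  by move=> g h; rewrite hh raddfD.
- split; first exact: cont_coord.
  by exists (C * Cp) => g; apply: le_trans (hC _ _) _; rewrite ler_wpM2l // ltW.
- by move=> g; rewrite he raddfD.
Qed.

Lemma cont_comb u : (forall i, cont_into aF (u i)) -> cont_into aK (comb u).
Proof.
move=> hu x e e0.
have [eta eta0 heta] := @N_small _ _ _ haF _ _ (av_ge0 haK) NZK (avD haK) _ (fun i : 'I_nK => b`_i) e e0.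
have := @filter_forall _ _ (fun i y => aF (u i y - u i x) < eta) _ (nbhs_filter x) (fun i => hu i x eta eta0).
apply: filterS => y hy; rewrite /comb -sumrB.
under eq_bigr do rewrite -scalerBl.
by apply: heta.
Qed.

Lemma bnd_sum (c : 'I_nK -> F) (C : 'I_nK -> R) :
  (forall i, aF (c i) <= C i) -> aK (\sum_i c i *: b`_i) <= \sum_i C i * aK b`_i.
Proof.
move=> h; apply: le_trans (N_sum_le haF NZK (avD haK) c (fun i => b`_i)) _.
by apply: ler_sum => i _; apply: ler_wpM2r; [exact: av_ge0|exact: h].
Qed.

Lemma qm_comb u : (forall i, quasimorphism aF (u i)) -> quasimorphism aK (comb u).
Proof.
move=> hu; split; first by move=> i; apply: cont_comb => j; case: (hu j).
have [C hC] := fin_all_exists (fun i => (hu i).2).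
exists (\sum_i C i * aK b`_i) => g h.
have -> : comb u (tg_mul g h) - comb u g - comb u h
    = \sum_i (u i (tg_mul g h) - u i g - u i h) *: b`_i.
  by rewrite /comb -!sumrB; apply: eq_bigr => i _; rewrite !scalerBl.
by apply: bnd_sum => i; apply: hC.
Qed.

Lemma trivial_comb u : (forall i, trivial_class aF (u i)) -> trivial_class aK (comb u).
Proof.
move=> hu; have [phi hphi] := fin_all_exists hu.
have [psi hpsi] := fin_all_exists hphi.
exists (comb phi), (comb psi); split; last split.
- split; first by apply: cont_comb => i; case: (hpsi i) => [[]].
  move=> g h; rewrite /comb -big_split; apply: eq_bigr => i _.
  by case: (hpsi i) => [[_ ->]] _; rewrite scalerDl.
- split; first by apply: cont_comb => i; case: (hpsi i) => _ [[]].
  have [C hC] := fin_all_exists (fun i => (hpsi i).2.1.2).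
  by exists (\sum_i C i * aK b`_i) => g; apply: bnd_sum => i; apply: hC.
- move=> g; rewrite /comb -big_split; apply: eq_bigr => i _.
  by case: (hpsi i) => _ [_ ->]; rewrite scalerDl.
Qed.

End Main.
Arguments trivial_comb {R F aF} haF {K aK} haK hext {G} u _.
Arguments comb {F K G} u x.
Arguments comb_coord {F K} x.
Arguments qm_coord {R F aF} haF hcomp {K aK} haK hext {G} f i _.
Arguments trivial_coord {R F aF} haF hcomp {K aK} haK hext {G} f i _.
Arguments qm_comb {R F aF} haF {K aK} haK hext {G} u _.
Arguments coord_comb {F K G} u i x.
Arguments trivial_zero {R L a} ha {G} f _.

Theorem corollary9p38 (R : realType) (p : nat) (p_prime : prime p)
    (Qp : fieldType) (absQp : Qp -> R) (hQp : is_Qp p absQp)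
    (n : nat) (K : fieldExtType Qp) (hdim : \dim {: K} = n)
    (absK : K -> R) (habsK : is_absval absK)
    (hext : forall c : Qp, absK (c%:A) = absQp c)
    (G : topGroup) :
  EH2cb_iso_pow absQp absK G n /\
  (EH2cb_zero absK G <-> EH2cb_zero absQp G).
Proof.
subst n; case: hQp => haF _ _ _ hcomp.
pose b := vbasis (fullv : {vspace K}).
have inj : forall f : tg_car G -> K, quasimorphism absK f ->
    (forall i, trivial_class absQp (fun x => coord b i (f x))) -> trivial_class absK f.
  move=> f _ h; have := trivial_comb haF habsK hext _ h.
  suff -> : comb (fun i x => coord b i (f x)) = f by [].
  by apply/funext => x; rewrite /comb comb_coord.
split.
  exists (fun f i x => coord b i (f x)); split.
  - by move=> f hf i; apply: (qm_coord haF hcomp habsK hext).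
  - move=> f g _ _ h i.
    suff -> : (fun x => coord b i (f x) - coord b i (g x))
        = (fun x => coord b i (f x - g x)) by apply: (trivial_coord haF hcomp habsK hext).
    by apply/funext => x; rewrite raddfB.
  - move=> c f g _ _ i; apply: (trivial_zero haF) => x.
    by rewrite linearP /= subrr.
  - exact: inj.
  - move=> u hu; exists (comb u); first exact: (qm_comb haF habsK hext).
    by move=> i; apply: (trivial_zero haF) => x; rewrite coord_comb subrr.
split.
- move=> hK u hu.
  have n0 : (0 < \dim (fullv : {vspace K}))%N by exact: (adim_gt0 (aspacef K)).
  pose i0 : 'I_(\dim (fullv : {vspace K})) := Ordinal n0.
  pose v := fun j : 'I_(\dim (fullv : {vspace K})) => if j == i0 then u else (fun _ => 0).
  have hv : forall j, quasimorphism absQp (v j).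
    move=> j; rewrite /v; case: (j == i0) => //; split.
      by move=> x e e0; apply: nearW => y; rewrite subrr av0.
    by exists 0 => g h; rewrite !subrr av0.
  have := trivial_coord haF hcomp habsK hext _ i0 (hK _ (qm_comb haF habsK hext _ hv)).
  suff -> : (fun x => coord b i0 (comb v x)) = u by [].
  by apply/funext => x; rewrite coord_comb /v eqxx.
- move=> hF f hf; apply: inj => // i; apply: hF; exact: (qm_coord haF hcomp habsK hext).
Qed.
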